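(* Let $K$ be a field of characteristic $p$, $q$ a power of $p$, $\mathbb{F}_q\subset K$. Extend the Carlitz module to $\phi:\mathbb{F}_q((T))\to K(\!(\tau)\!)$, $\phi(\sum_{i\ge -N}a_iT^i)=\sum_{i\ge-N}a_i\tau^i$, using on $K$ the $A$-field structure $\iota_0$ with $\iota_0(T)=0$. Give $\mathbb{F}_q((T))$ the language $\mathcal{L}_T=\{0,1,T,+,\cdot\}$ and $K(\!(\tau)\!)$ the language $\mathcal{L}_{\tau,\iota_0}=\{0,1,\iota_0(T),\tau,+,\cdot\}$. Then $\phi$ is an effective Diophantine map. If Hilbert's tenth problem over $(\mathbb{F}_q((T)),\mathcal{L}_T)$ has a negative answer, then so has Hilbert's tenth problem over $(K(\!(\tau)\!),\mathcal{L}_{\tau,\iota_0})$.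
   Context: $K(\!(\tau)\!)$ is the twisted Laurent series ring: series $\sum_{i\ge-N}a_i\tau^i$, $a_i\in K$, with usual addition and multiplication determined by $\tau a=a^q\tau$. For a set $R$ with language $\mathcal{L}$ (constants, functions, relations incl. $0$ and $=$), $S\subset R^k$ is Diophantine if $S=\{\vec x\mid\exists\vec y\ (f_1\wedge\dots\wedge f_r)\}$ with basic formulas $f_i$ of the form $(t_1,\dots,t_m)\in S'$, $S'$ a relation or equality and $t_j$ terms of $\mathcal{L}$. A map $d:R_1\to R_2$ is Diophantine if coordinatewise images of Diophantine sets are Diophantine; effective if a Diophantine definition of $d(S)$ is algorithmically computable from one of $S$. With $S_c'(\mathcal{L})=\{x\mid\{x\}\text{ Diophantine}\}$, Hilbert's tenth problem exists over $(R,\mathcal{L})$ if some recursive ring $R_0$ satisfies (constants) $\subset R_0\subset S_c'(\mathcal{L})$; it has a negative answer if no algorithm decides solvability in $R$ of finite conjunctions of basic formulas with extra coefficients in $R_0$.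
   Formalization: K is also assumed perfect: every element of K has a q-th root, where q is the given power of p. The statement above fails without it. *)

(* Defs.v *)
From HB Require Import structures.
From mathcomp Require Import all_boot all_order all_algebra all_field.
From Stdlib Require Import ClassicalEpsilon.
From Stdlib Require List.
Set Implicit Arguments. Unset Strict Implicit. Unset Printing Implicit Defensive.
Import Order.TTheory GRing.Theory Num.Theory.

Inductive prf : Type :=
| PZero | PSucc | PProj of nat | PComp of prf & seq prf
| PRec of prf & prf | PMu of prf.

Inductive peval : prf -> seq nat -> nat -> Prop :=
| pe_zero v : peval PZero v 0
| pe_succ v : peval PSucc v (nth 0%N v 0).+1
| pe_proj i v : peval (PProj i) v (nth 0%N v i)
| pe_comp f gs v ws y : pevals gs v ws -> peval f ws y -> peval (PComp f gs) v y
| pe_rec0 f g v y : peval f v y -> peval (PRec f g) (0%N :: v) y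
| pe_recS f g m v r y : peval (PRec f g) (m :: v) r ->
    peval g (m :: r :: v) y -> peval (PRec f g) (m.+1 :: v) y
| pe_mu f v m : peval f (m :: v) 0%N ->
    (forall j, (j < m)%N -> exists k, peval f (j :: v) k.+1) -> peval (PMu f) v m
with pevals : seq prf -> seq nat -> seq nat -> Prop :=
| pes_nil v : pevals [::] v [::]
| pes_cons g gs v w ws : peval g v w -> pevals gs v ws -> pevals (g :: gs) v (w :: ws).

Definition computable1 (f : nat -> nat) : Prop :=
  exists P, forall n, peval P [:: n] (f n).
Definition computable2 (f : nat -> nat -> nat) : Prop :=
  exists P, forall a b, peval P [:: a; b] (f a b).

(*    lone/lopp are the ring's 1 and negation (used only to say that   *)
(*    R_0 is a subring); the language constants are [lconsts].         *)
Record lstruct := LStruct {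
  car : Type;
  lzero : car; lone : car;
  ladd : car -> car -> car; lmul : car -> car -> car;
  lopp : car -> car;
  lconsts : seq car }.

(* terms: variables, language constants (indexed), parameters
   (codes of extra coefficients), +, . *)
Inductive term : Type :=
| Var of nat | Cst of nat | Par of nat | Add of term & term | Mul of term & term.

Fixpoint t2g (t : term) : GenTree.tree nat :=
  match t with
  | Var n => GenTree.Node 0 [:: GenTree.Leaf n]
  | Cst n => GenTree.Node 1 [:: GenTree.Leaf n]
  | Par n => GenTree.Node 2 [:: GenTree.Leaf n]
  | Add a b => GenTree.Node 3 [:: t2g a; t2g b]
  | Mul a b => GenTree.Node 4 [:: t2g a; t2g b]
  end.

Fixpoint g2t (g : GenTree.tree nat) : option term :=
  match g with
  | GenTree.Node 0 [:: GenTree.Leaf n] => Some (Var n)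
  | GenTree.Node 1 [:: GenTree.Leaf n] => Some (Cst n)
  | GenTree.Node 2 [:: GenTree.Leaf n] => Some (Par n)
  | GenTree.Node 3 [:: a; b] =>
      match g2t a, g2t b with Some x, Some y => Some (Add x y) | _, _ => None end
  | GenTree.Node 4 [:: a; b] =>
      match g2t a, g2t b with Some x, Some y => Some (Mul x y) | _, _ => None end
  | _ => None
  end.

Lemma t2gK : pcancel t2g g2t.
Proof. by elim=> //= a -> b ->. Qed.

HB.instance Definition _ := Countable.copy term (pcan_type t2gK).

Fixpoint teval (M : lstruct) (par env : nat -> car M) (t : term) : car M :=
  match t with
  | Var n => env n
  | Cst i => nth (lzero M) (lconsts M) i
  | Par c => par c
  | Add a b => @ladd M (teval par env a) (teval par env b)
  | Mul a b => @lmul M (teval par env a) (teval par env b)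
  end.

Fixpoint tparfree (t : term) : bool :=
  match t with
  | Par _ => false
  | Add a b | Mul a b => tparfree a && tparfree b
  | _ => true
  end.

Fixpoint tpars (t : term) : seq nat :=
  match t with
  | Par c => [:: c]
  | Add a b | Mul a b => tpars a ++ tpars b
  | _ => [::]
  end.

Definition system := seq (term * term).

Definition sat (M : lstruct) (par env : nat -> car M) (E : system) : Prop :=
  List.Forall (fun e => teval par env e.1 = teval par env e.2) E.

Definition parfree (E : system) : Prop :=
  List.Forall (fun e => tparfree e.1 && tparfree e.2) E.

(* variables 0..k-1 are the free ones, the others existentially quantified *)
Definition envk (M : lstruct) (k : nat) (x : k.-tuple (car M)) (y : nat -> car M)
  : nat -> car M :=
  fun n => if (n < k)%N then nth (lzero M) x n else y (n - k)%N.

Definition defines (M : lstruct) (k : nat) (E : system)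
    (S : k.-tuple (car M) -> Prop) : Prop :=
  parfree E /\
  forall x, S x <-> exists y : nat -> car M, sat (fun _ => lzero M) (envk x y) E.

Definition diophantine (M : lstruct) (k : nat) (S : k.-tuple (car M) -> Prop) : Prop :=
  exists E, defines E S.

Definition timage (M N : lstruct) (d : car M -> car N) (k : nat)
    (S : k.-tuple (car M) -> Prop) : k.-tuple (car N) -> Prop :=
  fun z => exists x, S x /\ z = map_tuple d x.

Definition dioph_map (M N : lstruct) (d : car M -> car N) : Prop :=
  forall k (S : k.-tuple (car M) -> Prop), diophantine S -> diophantine (timage d S).

(* effective: a Diophantine definition of d(S) is computable from one of S
   (codes via the canonical countType encoding [pickle]) *)
Definition effective_dioph_map (M N : lstruct) (d : car M -> car N) : Prop :=
  dioph_map d /\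
  exists G : nat -> nat, computable1 G /\
    forall k (E : system) (S : k.-tuple (car M) -> Prop), defines E S ->
      exists E', unpickle (G (pickle (k, E))) = Some E' /\ defines E' (timage d S).

(* A recursive subring R_0 is given by a decidable set of codes rdom,  *)
(* a valuation rval, and computable ring operations / equality on codes*)
Record recpres (M : lstruct) := RecPres {
  rdom : nat -> bool;
  rval : nat -> car M;
  rzero : nat; rone : nat;
  radd : nat -> nat -> nat; rmul : nat -> nat -> nat; ropp : nat -> nat;
  req : nat -> nat -> nat }.

Definition recursive_subring (M : lstruct) (R : recpres M) : Prop :=
  (computable1 (fun n => nat_of_bool (rdom R n)) /\
   computable2 (radd R) /\ computable2 (rmul R) /\
   computable1 (ropp R) /\ computable2 (req R)) /\
  (rdom R (rzero R) /\ rval R (rzero R) = lzero M) /\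
  (rdom R (rone R) /\ rval R (rone R) = lone M) /\
  (forall a b, rdom R a -> rdom R b ->
     rdom R (radd R a b) /\ rval R (radd R a b) = @ladd M (rval R a) (rval R b)) /\
  (forall a b, rdom R a -> rdom R b ->
     rdom R (rmul R a b) /\ rval R (rmul R a b) = @lmul M (rval R a) (rval R b)) /\
  (forall a, rdom R a -> rdom R (ropp R a) /\ rval R (ropp R a) = @lopp M (rval R a)) /\
  (forall a b, rdom R a -> rdom R b -> (req R a b = 1%N <-> rval R a = rval R b)).

Definition dioph_singleton (M : lstruct) (x : car M) : Prop :=
  diophantine (fun t : 1.-tuple (car M) => t = [tuple x]).

(* R_0 witnesses that Hilbert's tenth problem exists over (M, L) *)
Definition HTP_witness (M : lstruct) (R : recpres M) : Prop :=
  [/\ recursive_subring R,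
      (forall i, (i < size (lconsts M))%N ->
         exists a, rdom R a /\ rval R a = nth (lzero M) (lconsts M) i) &
      (forall a, rdom R a -> dioph_singleton (rval R a))].

Definition solvable (M : lstruct) (R : recpres M) (E : system) : Prop :=
  exists env : nat -> car M, sat (rval R) env E.

Definition params_in (M : lstruct) (R : recpres M) (E : system) : Prop :=
  List.Forall (fun e => all (rdom R) (tpars e.1 ++ tpars e.2)) E.

Definition HTP_negative (M : lstruct) : Prop :=
  exists R : recpres M, HTP_witness R /\
    forall F : nat -> nat, computable1 F ->
      exists E : system, params_in R E /\ ~ (solvable R E <-> F (pickle E) = 1%N).

(* 4. Twisted Laurent series R((tau)) with tau a = sigma(a) tau,       *)
(*    sigma invertible with inverse sigmai.                            *)
Local Open Scope ring_scope.
Section TLS.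
Variable R : nzRingType.

Record tls := TLS {
  tcoef : int -> R;
  tbdd : exists N : int, forall i : int, i < N -> tcoef i = 0 }.

Definition tlb (f : tls) : int := proj1_sig (constructive_indefinite_description _ (tbdd f)).

Lemma tmk_bdd (c : int -> R) (N : int) :
  exists N' : int, forall i : int, i < N' -> (if i < N then 0 else c i) = 0.
Proof. by exists N => i ->. Qed.

Definition tmk (c : int -> R) (N : int) : tls := TLS (tmk_bdd c N).

Definition tzero : tls := tmk (fun _ => 0) 0.
Definition tone : tls := tmk (fun i => if i == 0 then 1 else 0) 0.
Definition tconst (a : R) : tls := tmk (fun i => if i == 0 then a else 0) 0.
Definition tvar : tls := tmk (fun i => if i == 1 then 1 else 0) 0.
Definition tadd (f g : tls) : tls :=
  tmk (fun i => tcoef f i + tcoef g i) (Num.min (tlb f) (tlb g)).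
Definition topp (f : tls) : tls := tmk (fun i => - tcoef f i) (tlb f).

Definition spow (sigma sigmai : R -> R) (i : int) : R -> R :=
  match i with Posz m => iter m sigma | Negz m => iter m.+1 sigmai end.

(* (sum a_i tau^i)(sum b_j tau^j) = sum_n (sum_{i+j=n} a_i sigma^i(b_j)) tau^n *)
Definition tmul (sigma sigmai : R -> R) (f g : tls) : tls :=
  tmk (fun n => \sum_(k < (absz (n - tlb f - tlb g)%R).+1)
          tcoef f (tlb f + k%:Z) *
          spow sigma sigmai (tlb f + k%:Z) (tcoef g (n - tlb f - k%:Z)))
      (tlb f + tlb g).
End TLS.

Definition LT (F : finFieldType) : lstruct :=
  LStruct (@tzero F) (@tone F) (@tadd F) (@tmul F id id) (@topp F)
    [:: @tzero F; @tone F; @tvar F].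

Definition frob (K : fieldType) (q : nat) (x : K) : K := x ^+ q.
Definition qroot (K : fieldType) (q : nat) (x : K) : K :=
  epsilon (inhabits x) (fun y => y ^+ q = x).

(* K((tau)), tau a = a^q tau, language {0,1,iota_0(T),tau,+,.}, iota_0(T) = 0 *)
Definition Ltau (K : fieldType) (q : nat) : lstruct :=
  LStruct (@tzero K) (@tone K) (@tadd K) (@tmul K (frob q) (qroot q)) (@topp K)
    [:: @tzero K; @tone K; tconst (0 : K) (* iota_0(T) *); @tvar K].

Definition phi (F : finFieldType) (K : fieldType) (iota : F -> K) (f : tls F) : tls K :=
  tmk (fun i => iota (tcoef f i)) (tlb f).

(* Main.v *)
Require Import Defs.
From HB Require Import structures.
From mathcomp Require Import all_boot all_order all_algebra all_field.
From mathcomp Require Import zify ring.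
From Stdlib Require Import ProofIrrelevance FunctionalExtensionality ClassicalEpsilon.
Import Order.TTheory GRing.Theory Num.Theory.
Set Implicit Arguments. Unset Strict Implicit. Unset Printing Implicit Defensive.

Section Comp.
Local Open Scope nat_scope.

Definition cf (f : seq nat -> nat) := exists P, forall v, peval P v (f v).
Local Notation a0 v := (nth 0 v 0).
Local Notation a1 v := (nth 0 v 1).
Local Notation a2 v := (nth 0 v 2).

Lemma cf_ext f g : cf f -> f =1 g -> cf g.
Proof. by case=> P HP e; exists P => v; rewrite -e. Qed.

Lemma cf_proj i : cf (fun v => nth 0 v i).
Proof. by exists (PProj i) => v; constructor. Qed.

Lemma cf_succ : cf (fun v => (a0 v).+1).
Proof. by exists PSucc => v; constructor. Qed.

Lemma cf_compl f (gs : seq (seq nat -> nat)) : cf f -> List.Forall cf gs ->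
  cf (fun v => f (map (fun g => g v) gs)).
Proof.
case=> P HP Hgs.
have [Ps HPs] : exists Ps, forall v, pevals Ps v (map (fun g => g v) gs).
  elim: Hgs => [|g gs' [Q HQ] _ [Ps HPs]]; first by exists [::] => v; constructor.
  by exists (Q :: Ps) => v; constructor.
by exists (PComp P Ps) => v; econstructor.
Qed.

Lemma cf_comp1 g h : cf (fun v => g (a0 v)) -> cf h -> cf (fun v => g (h v)).
Proof.
move=> Hg Hh; have := cf_compl Hg (List.Forall_cons _ Hh (List.Forall_nil _)).
by move=> H; apply: cf_ext H _.
Qed.

Lemma cf_comp2 g h1 h2 : cf (fun v => g (a0 v) (a1 v)) -> cf h1 -> cf h2 ->
  cf (fun v => g (h1 v) (h2 v)).
Proof.
move=> Hg H1 H2.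
have := cf_compl Hg (List.Forall_cons _ H1 (List.Forall_cons _ H2 (List.Forall_nil _))).
by move=> H; apply: cf_ext H _.
Qed.

Lemma cf_comp3 g h1 h2 h3 : cf (fun v => g (a0 v) (a1 v) (a2 v)) -> cf h1 -> cf h2 ->
  cf h3 -> cf (fun v => g (h1 v) (h2 v) (h3 v)).
Proof.
move=> Hg H1 H2 H3.
have := cf_compl Hg (List.Forall_cons _ H1 (List.Forall_cons _ H2
   (List.Forall_cons _ H3 (List.Forall_nil _)))).
by move=> H; apply: cf_ext H _.
Qed.

Fixpoint prec (h : nat -> nat) (g : nat -> nat -> nat -> nat) n x :=
  if n is m.+1 then g m (prec h g m x) x else h x.

Lemma cf_rec h g : cf (fun v => h (a0 v)) -> cf (fun v => g (a0 v) (a1 v) (a2 v)) ->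
  cf (fun v => prec h g (a0 v) (a1 v)).
Proof.
case=> H HH [G HG].
exists (PComp (PRec H G) [:: PProj 0; PProj 1]) => v.
econstructor; first by do 2 econstructor; constructor.
elim: (a0 v) => [|m IH] /=; first by constructor; apply: HH.
by econstructor; [exact: IH | exact: HG].
Qed.

Lemma cf_mu (f : nat -> seq nat -> nat) (g : seq nat -> nat) :
  cf (fun v => f (a0 v) (behead v)) ->
  (forall v, f (g v) v = 0 /\ forall j, j < g v -> f j v <> 0) -> cf g.
Proof.
case=> P HP Hg; exists (PMu P) => v; have [H0 H1] := Hg v.
constructor; first by have := HP (g v :: v); rewrite /= H0.
move=> j /H1 Hj; exists (f j v).-1; rewrite prednK; first exact: (HP (j :: v)).
by rewrite lt0n; apply/eqP.
Qed.

Lemma cf_const c : cf (fun _ => c).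
Proof.
elim: c => [|c IH]; first by exists PZero => v; constructor.
exact: (cf_comp1 cf_succ IH).
Qed.

Local Notation c1 g := (cf (fun v => g (a0 v))).
Local Notation c2 g := (cf (fun v => g (a0 v) (a1 v))).
Local Notation c3 g := (cf (fun v => g (a0 v) (a1 v) (a2 v))).

Lemma c2_rec h g : c1 h -> c3 g -> c2 (prec h g).
Proof. exact: cf_rec. Qed.

Lemma c2_iter g : c1 g -> c2 (fun n x => iter n g x).
Proof.
move=> Hg; apply: cf_ext (c2_rec (h := id) (g := fun _ r _ => g r) _ _) _.
- exact: cf_proj.
- exact: cf_comp1 Hg (cf_proj 1).
move=> v /=; by elim: (a0 v) => //= n ->.
Qed.

Lemma c1_pred : c1 predn.
Proof.
have H : c2 (prec (fun _ => 0) (fun m _ _ => m)).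
  apply: c2_rec; [exact: cf_const | exact: cf_proj].
apply: cf_ext (cf_comp2 H (cf_proj 0) (cf_const 0)) _.
by case=> [|[|n] v].
Qed.

Lemma c2_add : c2 addn.
Proof.
have H : c2 (prec id (fun _ r _ => r.+1)).
  apply: c2_rec; [exact: cf_proj | exact: cf_comp1 cf_succ (cf_proj 1)].
apply: cf_ext H _ => v; by elim: (a0 v) => //= n ->.
Qed.

Lemma c2_sub : c2 subn.
Proof.
have H : c2 (fun n x => iter n predn x) by exact: c2_iter c1_pred.
apply: cf_ext (cf_comp2 (g := fun n x => iter n predn x) H (cf_proj 1) (cf_proj 0)) _ => v /=.
elim: (a1 v) => [|n IH] /=; first by rewrite subn0.
by rewrite IH subnS.
Qed.

Lemma c2_mul : c2 muln.
Proof.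
have H : c2 (prec (fun _ => 0) (fun _ r x => r + x)).
  apply: c2_rec; [exact: cf_const | exact: cf_comp2 c2_add (cf_proj 1) (cf_proj 2)].
apply: cf_ext H _ => v; elim: (a0 v) => //= n ->; by rewrite mulSn addnC.
Qed.

Lemma c2_exp : c2 (fun a b => a ^ b).
Proof.
have H : c2 (prec (fun _ => 1) (fun _ r x => r * x)).
  apply: c2_rec; [exact: cf_const | exact: cf_comp2 c2_mul (cf_proj 1) (cf_proj 2)].
apply: cf_ext (cf_comp2 H (cf_proj 1) (cf_proj 0)) _ => v /=.
elim: (a1 v) => //= n ->; by rewrite expnS mulnC.
Qed.

Definition isz n : nat := n == 0.
Lemma c1_isz : c1 isz.
Proof.
have H : c2 (prec (fun _ => 1) (fun _ _ _ => 0)).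
  apply: c2_rec; exact: cf_const.
apply: cf_ext (cf_comp2 H (cf_proj 0) (cf_const 0)) _.
by case=> [|[|n] v].
Qed.

Definition ifz (b x y : nat) := if b == 0 then x else y.
Lemma c3_ifz : c3 ifz.
Proof.
have H1 := cf_comp1 c1_isz (cf_proj 0).
have H2 := cf_comp2 c2_sub (cf_const 1) H1.
apply: cf_ext (cf_comp2 c2_add (cf_comp2 c2_mul H1 (cf_proj 1))
   (cf_comp2 c2_mul H2 (cf_proj 2))) _ => v /=.
by rewrite /ifz /isz; case: eqP => _ /=; rewrite ?mul1n ?mul0n ?addn0.
Qed.

Lemma cf_ifz b x y : cf b -> cf x -> cf y -> cf (fun v => ifz (b v) (x v) (y v)).
Proof. exact: cf_comp3 c3_ifz. Qed.
Lemma cf_add x y : cf x -> cf y -> cf (fun v => x v + y v).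
Proof. exact: cf_comp2 c2_add. Qed.
Lemma cf_sub x y : cf x -> cf y -> cf (fun v => x v - y v).
Proof. exact: cf_comp2 c2_sub. Qed.
Lemma cf_mul x y : cf x -> cf y -> cf (fun v => x v * y v).
Proof. exact: cf_comp2 c2_mul. Qed.
Lemma cf_exp x y : cf x -> cf y -> cf (fun v => x v ^ y v).
Proof. exact: cf_comp2 c2_exp. Qed.
Lemma cf_isz x : cf x -> cf (fun v => isz (x v)).
Proof. exact: cf_comp1 c1_isz. Qed.

Lemma cf_eqb x y : cf x -> cf y -> cf (fun v => nat_of_bool (x v == y v)).
Proof.
move=> Hx Hy; apply: cf_ext (cf_isz (cf_add (cf_sub Hx Hy) (cf_sub Hy Hx))) _ => v.
by rewrite /isz addn_eq0 !subn_eq0 -eqn_leq.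
Qed.

Lemma cf_ltb x y : cf x -> cf y -> cf (fun v => nat_of_bool (x v < y v)).
Proof.
move=> Hx Hy; apply: cf_ext (cf_sub (cf_const 1) (cf_isz (cf_sub Hy Hx))) _ => v.
by rewrite /isz subn_eq0; case: leqP.
Qed.

Lemma cf_div x y : cf x -> cf y -> cf (fun v => x v %/ y v).
Proof.
move=> Hx Hy; apply: cf_comp2 _ Hx Hy.
pose f q w := ifz (a1 w) 0 (1 - nat_of_bool (a0 w < a1 w * q.+1)).
apply: (@cf_mu f).
  have H : cf (fun v => ifz (nth 0 v 2) 0 (1 - nat_of_bool (nth 0 v 1 < nth 0 v 2 * (a0 v).+1))).
    apply: cf_ifz; first exact: cf_proj.
      exact: cf_const.
    apply: cf_sub; first exact: cf_const.
    apply: cf_ltb; first exact: cf_proj.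
    by apply: cf_mul; [exact: cf_proj | exact: cf_comp1 cf_succ (cf_proj 0)].
  by apply: cf_ext H _ => v; rewrite /f !nth_behead.
move=> v; rewrite /f /ifz; case: eqP => [->|/eqP d0]; first by rewrite divn0.
split; first by rewrite mulnC ltn_ceil ?lt0n.
move=> j Hj; rewrite ltnNge.
suff -> : a1 v * j.+1 <= a0 v by [].
apply: leq_trans (leq_trunc_div (a0 v) (a1 v)).
by rewrite mulnC leq_mul2r Hj orbT.
Qed.

Lemma cf_hz x : cf x -> cf (fun v => x v).
Proof. by []. Qed.

Definition oddn x := x - x %/ 2 * 2.
Lemma oddnE x : oddn x = odd x.
Proof. by rewrite /oddn {1}(divn_eq x 2) addKn modn2. Qed.
Lemma cf_oddn x : cf x -> cf (fun v => oddn (x v)).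
Proof. move=> Hx; apply: cf_sub Hx (cf_mul (cf_div Hx (cf_const 2)) (cf_const 2)). Qed.

Definition ccons a b := 2 ^ a * (b.*2).+1.
Definition hdc c := find (fun v => odd (c %/ 2 ^ v)) (iota 0 c).
Definition tlc c := (c %/ 2 ^ hdc c) %/ 2.
Arguments ccons : simpl never.
Arguments hdc : simpl never.
Arguments tlc : simpl never.

Lemma ccons_gt0 a b : 0 < ccons a b.
Proof. by rewrite /ccons muln_gt0 expn_gt0. Qed.

Lemma ccons_div a b j : j <= a -> ccons a b %/ 2 ^ j = 2 ^ (a - j) * (b.*2).+1.
Proof.
move=> ja; rewrite /ccons -{1}(subnK ja) expnD mulnAC mulnK ?expn_gt0 //.
Qed.

Lemma find_iota (p : pred nat) n a : a < n -> p a -> (forall j, j < a -> ~~ p j) ->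
  find p (iota 0 n) = a.
Proof.
move=> an pa lo; rewrite -(subnKC (ltnW an)) iotaD find_cat.
have -> : has p (iota 0 a) = false.
  apply/hasPn => j; rewrite mem_iota add0n => /andP[_ /lo] //.
rewrite size_iota add0n; case E: (n - a) => [|m]; first by move: an; rewrite -subn_gt0 E.
by rewrite /= pa addn0.
Qed.

Lemma hdc_cons a b : hdc (ccons a b) = a.
Proof.
apply: find_iota.
- apply: (leq_trans (ltn_expl a (ltnSn 1))); rewrite /ccons leq_pmulr //.
- by rewrite ccons_div // subnn expn0 mul1n /= odd_double.
by move=> j ja; rewrite ccons_div ?(ltnW ja) // oddM oddX /= subn_eq0 leqNgt ja.

Qed.

Lemma tlc_cons a b : tlc (ccons a b) = b.
Proof.
rewrite /tlc hdc_cons ccons_div // subnn expn0 mul1n -addn1 -muln2 divnMDl //.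
by rewrite divn_small ?addn0.
Qed.

Lemma hdc0 : hdc 0 = 0. Proof. by []. Qed.
Lemma tlc0 : tlc 0 = 0. Proof. by rewrite /tlc div0n. Qed.

Lemma ccons_surj c : 0 < c -> exists a b, c = ccons a b.
Proof.
elim/ltn_ind: c => c IH c0.
case Oc: (odd c).
  exists 0, c./2; rewrite /ccons expn0 mul1n -[in LHS](odd_double_half c) Oc.
  by rewrite add1n.
have Hc : c = (c./2).*2 by rewrite -[in LHS](odd_double_half c) Oc add0n.
have h0 : 0 < c./2 by move: c0; rewrite {1}Hc double_gt0.
have lt : c./2 < c by rewrite {2}Hc -addnn -{1}[c./2]add0n ltn_add2r.
have [a [b E]] := IH _ lt h0.
by exists a.+1, b; rewrite Hc E /ccons expnS -mulnA mul2n.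
Qed.

Lemma cf_ccons x y : cf x -> cf y -> cf (fun v => ccons (x v) (y v)).
Proof.
move=> Hx Hy; rewrite /ccons; apply: cf_mul; first exact: cf_exp (cf_const 2) Hx.
apply: cf_ext (cf_comp1 cf_succ (cf_mul Hy (cf_const 2))) _ => v.
by rewrite muln2.
Qed.

Lemma cf_hdc x : cf x -> cf (fun v => hdc (x v)).
Proof.
move=> Hx; apply: (cf_comp1 (g := hdc)) Hx.
pose f k w := ifz (a0 w) 0 (1 - oddn (a0 w %/ 2 ^ k)).
apply: (@cf_mu f).
  have H : cf (fun v => ifz (a1 v) 0 (1 - oddn (a1 v %/ 2 ^ a0 v))).
    apply: cf_ifz; [exact: cf_proj | exact: cf_const |].
    apply: cf_sub; [exact: cf_const | apply: cf_oddn; apply: cf_div; first exact: cf_proj].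
    exact: cf_exp (cf_const 2) (cf_proj 0).
  by apply: cf_ext H _ => v; rewrite /f !nth_behead.
move=> v; rewrite /f /ifz oddnE; case: eqP => [->|/eqP c0]; first by [].
have [a [b E]] : exists a b, a0 v = ccons a b by apply: ccons_surj; rewrite lt0n.
rewrite E hdc_cons ccons_div // subnn expn0 mul1n /= ?oddnE odd_double; split=> // j ja.
by rewrite ccons_div ?(ltnW ja) // oddnE oddM oddX /= subn_eq0 leqNgt ja.
Qed.

Lemma cf_tlc x : cf x -> cf (fun v => tlc (x v)).
Proof.
move=> Hx; rewrite /tlc; apply: cf_div (cf_const 2).
exact: cf_div Hx (cf_exp (cf_const 2) (cf_hdc Hx)).
Qed.

Definition st r p A := ccons r (ccons p A).
Definition step (f : nat -> nat -> nat) s :=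
  ifz (hdc s) s (st (tlc (hdc s)) (hdc (hdc s)) (ccons (f (hdc (tlc s)) (hdc (hdc s))) (tlc (tlc s)))).
Fixpoint lbmap (f : nat -> nat -> nat) p l :=
  if l is x :: l' then f p x :: lbmap f x l' else [::].
Local Notation code := CodeSeq.code.

Lemma code_cons x l : code (x :: l) = ccons x (code l). Proof. by []. Qed.

Lemma size_le_code l : size l <= code l.
Proof.
elim: l => //= x l IH; rewrite /ccons (leq_trans _ (leq_pmull _ _)) ?expn_gt0 //.
by rewrite ltnS (leq_trans IH) // -addnn leq_addr.
Qed.

Lemma iter_step f l j p Al : size l <= j ->
  iter j (step f) (st (code l) p (code Al)) =
  st 0 (last p l) (code (catrev (lbmap f p l) Al)).
Proof.
elim: l j p Al => [|x l IH] j p Al /=.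
  move=> _; elim: j => //= j ->.
  by rewrite /step /st hdc_cons.
case: j => // j; rewrite ltnS => Hj; rewrite iterSr.
have -> : step f (st (ccons x (code l)) p (code Al)) = st (code l) x (code (f p x :: Al)).
  rewrite /step /st !hdc_cons !tlc_cons /ifz.
  have /negbTE -> : ccons x (code l) != 0 by rewrite -lt0n ccons_gt0.
  by rewrite hdc_cons.
by rewrite IH.
Qed.

Definition lbrev f p c A := tlc (tlc (iter c (step f) (st c p A))).

Lemma lbrevE f p l Al : lbrev f p (code l) (code Al) = code (catrev (lbmap f p l) Al).
Proof. by rewrite /lbrev iter_step ?size_le_code // /st !tlc_cons. Qed.

Lemma cf_step f x : c2 f -> cf x -> cf (fun v => step f (x v)).
Proof.
move=> Hf Hx; rewrite /step /st.
apply: cf_ifz; first exact: cf_hdc.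
  exact: Hx.
apply: cf_ccons; first by apply: cf_tlc; apply: cf_hdc.
apply: cf_ccons; first by apply: cf_hdc; apply: cf_hdc.
apply: cf_ccons; last by apply: cf_tlc; apply: cf_tlc.
apply: (cf_comp2 (g := f)) Hf _ _.
  by apply: cf_hdc; apply: cf_tlc.
by apply: cf_hdc; apply: cf_hdc.
Qed.

Lemma cf_lbrev f p c A : c2 f -> cf p -> cf c -> cf A ->
  cf (fun v => lbrev f (p v) (c v) (A v)).
Proof.
move=> Hf Hp Hc HA; rewrite /lbrev; apply: cf_tlc; apply: cf_tlc.
have Hi : cf (fun v => iter (a0 v) (step f) (a1 v)).
  apply: c2_iter; exact: cf_step Hf (cf_proj 0).
exact: (cf_comp2 (g := fun n x => iter n (step f) x) Hi Hc (cf_ccons Hc (cf_ccons Hp HA))).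
Qed.

End Comp.

Section Trans.
Local Open Scope nat_scope.
Local Notation a0 v := (nth 0 v 0).
Local Notation a1 v := (nth 0 v 1).
Local Notation code := CodeSeq.code.

Definition hC (i : nat) := if i < 2 then i else i.+1.
Fixpoint tr (t : term) : term :=
  match t with
  | Var n => Var n | Cst i => Cst (hC i) | Par c => Par c
  | Add a b => Add (tr a) (tr b) | Mul a b => Mul (tr a) (tr b)
  end.
Definition trE (E : system) : system := map (fun e => (tr e.1, tr e.2)) E.
Definition comEq (i : nat) : term * term := (Mul (Var i) (Cst 3), Mul (Cst 3) (Var i)).
Fixpoint exlist m := if m is m'.+1 then comEq m' :: exlist m' else [::].
Definition transl (M : nat) (E : system) := trE E ++ exlist M.

Definition Lc n := ccons (ccons n 0) (ccons 0 0).
Definition Rc n := ccons 0 (ccons (ccons n 0) 0).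
Definition encT t := map pickle (GenTree.encode (t2g t)).
Arguments Lc : simpl never.
Arguments Rc : simpl never.
Arguments encT : simpl never.

Lemma pickle_term t : pickle t = code (encT t). Proof. by []. Qed.

Lemma pickle_inl n : pickle (inl n : nat + nat) = Lc n. Proof. by []. Qed.
Lemma pickle_inr n : pickle (inr n : nat + nat) = Rc n. Proof. by []. Qed.
Lemma encT_leaf k n : k < 3 -> 
  encT (match k with 0 => Var n | 1 => Cst n | _ => Par n end) = [:: Lc k.+1; Rc n; Lc 0].
Proof.
move=> Hk; rewrite /encT.
have -> : GenTree.encode (t2g (match k with 0 => Var n | 1 => Cst n | _ => Par n end))
   = [:: inl k.+1; inr n; inl 0] by case: k Hk => [|[|[|]]].
by rewrite !map_cons !pickle_inl pickle_inr.
Qed.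
Lemma encT_Var n : encT (Var n) = [:: Lc 1; Rc n; Lc 0]. Proof. exact: (@encT_leaf 0). Qed.
Lemma encT_Cst n : encT (Cst n) = [:: Lc 2; Rc n; Lc 0]. Proof. exact: (@encT_leaf 1). Qed.
Lemma encT_Par n : encT (Par n) = [:: Lc 3; Rc n; Lc 0]. Proof. exact: (@encT_leaf 2). Qed.
Lemma encT_node k a b : k < 2 -> encT (if k is 0 then Add a b else Mul a b) =
   Lc k.+4 :: encT a ++ encT b ++ [:: Lc 0].
Proof.
move=> Hk; rewrite /encT.
have -> : GenTree.encode (t2g (if k is 0 then Add a b else Mul a b)) =
   inl k.+4 :: rcons (GenTree.encode (t2g a) ++ (GenTree.encode (t2g b) ++ [::])) (inl 0)
  by case: k Hk => [|[|]].
by rewrite map_cons map_rcons !map_cat !pickle_inl cats0 -cats1 catA.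
Qed.
Lemma encT_Add a b : encT (Add a b) = Lc 4 :: encT a ++ encT b ++ [:: Lc 0].
Proof. exact: (@encT_node 0). Qed.
Lemma encT_Mul a b : encT (Mul a b) = Lc 5 :: encT a ++ encT b ++ [:: Lc 0].
Proof. exact: (@encT_node 1). Qed.

Definition ftr p x := if p == Lc 2 then Rc (hC (hdc (hdc (tlc x)))) else x.

Lemma lbmap_cat f p l1 l2 : lbmap f p (l1 ++ l2) = lbmap f p l1 ++ lbmap f (last p l1) l2.
Proof. by elim: l1 p => //= x l IH p; rewrite IH. Qed.

Lemma last_encT t p : last p (encT t) = Lc 0.
Proof.
case: t => *; rewrite ?encT_Var ?encT_Cst ?encT_Par ?encT_Add ?encT_Mul //=.
all: by rewrite !last_cat.
Qed.

Lemma Lc_inj n m : Lc n = Lc m -> n = m.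
Proof. by move/(congr1 (fun c => hdc (hdc c))); rewrite /Lc !hdc_cons. Qed.
Lemma Rc_neq n : Rc n != Lc 2.
Proof. by apply/eqP => /(congr1 hdc); rewrite /Lc /Rc !hdc_cons. Qed.
Lemma Lc_neq n : n != 2 -> Lc n != Lc 2.
Proof. by move=> /eqP H; apply/eqP => /Lc_inj. Qed.

Lemma ftr_n p x : p != Lc 2 -> ftr p x = x.
Proof. by rewrite /ftr => /negbTE ->. Qed.
Lemma ftr_L x : ftr (Lc 2) x = Rc (hC (hdc (hdc (tlc x)))).
Proof. by rewrite /ftr eqxx. Qed.
Lemma Lc0 : Lc 0 != Lc 2. Proof. exact: Lc_neq. Qed.
Lemma Lc1 : Lc 1 != Lc 2. Proof. exact: Lc_neq. Qed.
Lemma Lc3 : Lc 3 != Lc 2. Proof. exact: Lc_neq. Qed.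
Lemma Lc4 : Lc 4 != Lc 2. Proof. exact: Lc_neq. Qed.
Lemma Lc5 : Lc 5 != Lc 2. Proof. exact: Lc_neq. Qed.

Lemma lbmap_encT t p : p != Lc 2 -> lbmap ftr p (encT t) = encT (tr t).
Proof.
elim: t p => [n|n|n|a IHa b IHb|a IHa b IHb] p Hp.
- by rewrite encT_Var /= ?encT_Var !ftr_n ?Lc1 ?Rc_neq.
- by rewrite encT_Cst /= ?encT_Cst ftr_n // ftr_L ftr_n ?Rc_neq // /Rc tlc_cons !hdc_cons.
- by rewrite encT_Par /= ?encT_Par !ftr_n ?Lc3 ?Rc_neq.
- rewrite encT_Add /= ?encT_Add ftr_n // lbmap_cat IHa ?Lc4 //.
  by rewrite lbmap_cat IHb ?last_encT ?Lc0 // last_encT /= ftr_n ?Lc0.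
- rewrite encT_Mul /= ?encT_Mul ftr_n // lbmap_cat IHa ?Lc5 //.
  by rewrite lbmap_cat IHb ?last_encT ?Lc0 // last_encT /= ftr_n ?Lc0.
Qed.

Lemma lbmap_id p l : lbmap (fun _ x => x) p l = l.
Proof. by elim: l p => //= x l IH p; rewrite IH. Qed.

Definition TT c := lbrev (fun _ x => x) 0 (lbrev ftr 0 c 0) 0.

Lemma TT_pickle t : TT (pickle t) = pickle (tr t).
Proof.
rewrite /TT pickle_term (lbrevE _ _ (encT t) [::]).
rewrite lbmap_encT // (lbrevE _ _ _ [::]) lbmap_id.
by rewrite !catrevE !cats0 revK.
Qed.

Definition TE c := ccons (TT (hdc c)) (ccons (TT (hdc (tlc c))) 0).
Lemma TE_pickle (e : term * term) : TE (pickle e) = pickle (tr e.1, tr e.2).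
Proof.
have -> : pickle e = ccons (pickle e.1) (ccons (pickle e.2) 0) by [].
by rewrite /TE hdc_cons tlc_cons hdc_cons !TT_pickle.
Qed.

Lemma comEq_pickle i : pickle (comEq i) =
  ccons (code [:: Lc 5; Lc 1; Rc i; Lc 0; Lc 2; Rc 3; Lc 0; Lc 0])
        (ccons (code [:: Lc 5; Lc 2; Rc 3; Lc 0; Lc 1; Rc i; Lc 0; Lc 0]) 0).
Proof.
have -> : pickle (comEq i) = ccons (pickle (Mul (Var i) (Cst 3)))
   (ccons (pickle (Mul (Cst 3) (Var i))) 0) by [].
by rewrite !pickle_term !encT_Mul !encT_Var !encT_Cst /=.
Qed.

Definition XC M := prec (fun _ => 0) (fun m r _ => ccons (pickle (comEq m)) r) M 0.
Lemma XC_pickle M : XC M = code (map pickle (exlist M)).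
Proof.
elim: M => [|M IH]; first by [].
change (XC M.+1) with (ccons (pickle (comEq M)) (XC M)).
change (exlist M.+1) with (comEq M :: exlist M).
rewrite map_cons code_cons IH; reflexivity.
Qed.

Definition OUT e M := lbrev (fun _ x => x) 0 (lbrev (fun _ x => TE x) 0 e 0) (XC M).

Lemma OUT_pickle E M : OUT (pickle E) M = pickle (transl M E).
Proof.
have -> : pickle E = code (map pickle E) by [].
rewrite /OUT (lbrevE _ _ _ [::]) XC_pickle lbrevE lbmap_id.
have -> : lbmap (fun _ x => TE x) 0 (map pickle E) = map pickle (trE E).
  by elim: E => //= e E IH; rewrite /= TE_pickle -IH; case: E {IH}.
rewrite !catrevE cats0 revK.
by have -> : pickle (transl M E) = code (map pickle (trE E ++ exlist M)) by []; rewrite map_cat.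
Qed.

Definition Gk c := OUT (hdc (tlc c)) (hdc c + hdc (tlc c)).
Lemma Gk_pickle k E : Gk (pickle (k, E)) = pickle (transl (k + pickle E) E).
Proof.
have -> : pickle (k, E) = ccons k (ccons (pickle E) 0) by [].
by rewrite /Gk tlc_cons !hdc_cons OUT_pickle.
Qed.
Definition G2 e := OUT e e.


End Trans.

Section C.
Local Open Scope nat_scope.
Local Notation a0 v := (nth 0 v 0).
Local Notation a1 v := (nth 0 v 1).
Local Notation code := CodeSeq.code.
Lemma cf_hC x : cf x -> cf (fun v => hC (x v)).
Proof.
move=> Hx; apply: cf_ext (cf_ifz (cf_ltb Hx (cf_const 2)) (cf_comp1 cf_succ Hx) Hx) _ => v.
by rewrite /hC /ifz; case: (_ < 2).
Qed.
Lemma cf_Lc x : cf x -> cf (fun v => Lc (x v)).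
Proof. by move=> Hx; rewrite /Lc; apply: cf_ccons (cf_ccons Hx (cf_const 0)) (cf_const _). Qed.
Lemma cf_Rc x : cf x -> cf (fun v => Rc (x v)).
Proof. by move=> Hx; rewrite /Rc; apply: cf_ccons (cf_const 0) (cf_ccons (cf_ccons Hx (cf_const 0)) (cf_const 0)). Qed.
Lemma cf_ftr : cf (fun v => ftr (a0 v) (a1 v)).
Proof.
have H : cf (fun v => ifz (nat_of_bool (a0 v == Lc 2)) (a1 v) (Rc (hC (hdc (hdc (tlc (a1 v))))))).
  apply: cf_ifz; first exact: cf_eqb (cf_proj 0) (cf_const _).
    exact: cf_proj.
  by apply: cf_Rc; apply: cf_hC; apply: cf_hdc; apply: cf_hdc; apply: cf_tlc; apply: cf_proj.
by apply: cf_ext H _ => v; rewrite /ftr /ifz; case: (a0 v == Lc 2).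
Qed.
Lemma cf_TT x : cf x -> cf (fun v => TT (x v)).
Proof.
move=> Hx; rewrite /TT; apply: cf_lbrev; [exact: cf_proj 1 | exact: cf_const | | exact: cf_const].
by apply: cf_lbrev; [exact: cf_ftr | exact: cf_const | exact: Hx | exact: cf_const].
Qed.
Lemma cf_TE x : cf x -> cf (fun v => TE (x v)).
Proof.
move=> Hx; rewrite /TE; apply: cf_ccons; first by apply: cf_TT; apply: cf_hdc.
by apply: cf_ccons (cf_const 0); apply: cf_TT; apply: cf_hdc; apply: cf_tlc.
Qed.
Lemma cf_codeF (gs : seq (seq nat -> nat)) : List.Forall cf gs ->
  cf (fun v => code (map (fun g => g v) gs)).
Proof.
elim=> [|g gs' Hg _ IH]; first exact: cf_const 0.
exact: cf_ext (cf_ccons Hg IH) (fun v => esym (code_cons _ _)).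
Qed.

Ltac fall H := repeat (apply: List.Forall_cons; first (first [exact: cf_Rc H | exact: cf_const]));
  exact: List.Forall_nil.

Lemma cf_comEq x : cf x -> cf (fun v => pickle (comEq (x v))).
Proof.
move=> Hx.
have H1 := cf_codeF (gs := [:: fun _ => Lc 5; fun _ => Lc 1; fun v => Rc (x v); fun _ => Lc 0;
   fun _ => Lc 2; fun _ => Rc 3; fun _ => Lc 0; fun _ => Lc 0]) ltac:(fall Hx).
have H2 := cf_codeF (gs := [:: fun _ => Lc 5; fun _ => Lc 2; fun _ => Rc 3; fun _ => Lc 0;
   fun _ => Lc 1; fun v => Rc (x v); fun _ => Lc 0; fun _ => Lc 0]) ltac:(fall Hx).
apply: cf_ext (cf_ccons H1 (cf_ccons H2 (cf_const 0))) _ => v.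
rewrite comEq_pickle; reflexivity.
Qed.
Lemma cf_XC x : cf x -> cf (fun v => XC (x v)).
Proof.
move=> Hx; rewrite /XC.
have H : cf (fun v => prec (fun _ => 0) (fun m r _ => ccons (pickle (comEq m)) r) (a0 v) (a1 v)).
  apply: cf_rec; first exact: cf_const.
  by apply: cf_ccons; [apply: cf_comEq; exact: cf_proj | exact: cf_proj].
exact: (cf_comp2 (g := fun a b => prec (fun _ => 0) (fun m r _ => ccons (pickle (comEq m)) r) a b) H Hx (cf_const 0)).
Qed.
Lemma cf_OUT x y : cf x -> cf y -> cf (fun v => OUT (x v) (y v)).
Proof.
move=> Hx Hy; rewrite /OUT; apply: cf_lbrev; [exact: cf_proj 1 | exact: cf_const | | exact: cf_XC].
apply: cf_lbrev; [ | exact: cf_const | exact: Hx | exact: cf_const].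
exact: cf_TE (cf_proj 1).
Qed.
Lemma cf_Gk : cf (fun v => Gk (a0 v)).
Proof.
rewrite /Gk; apply: cf_OUT; first by apply: cf_hdc; apply: cf_tlc; apply: cf_proj.
by apply: cf_add; [apply: cf_hdc; apply: cf_proj | apply: cf_hdc; apply: cf_tlc; apply: cf_proj].
Qed.
Lemma cf_G2 : cf (fun v => G2 (a0 v)).
Proof. by rewrite /G2; apply: cf_OUT; apply: cf_proj. Qed.

End C.

Local Open Scope ring_scope.

Section TLSTheory.
Variable R : nzRingType.
Implicit Types f g : tls R.

Lemma tls_ext f g : tcoef f =1 tcoef g -> f = g.
Proof.
case: f g => [cf bf] [cg bg] /= E.
have ? := functional_extensionality _ _ E; subst cg.
by rewrite (proof_irrelevance _ bf bg).
Qed.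

Lemma tlbP f i : i < tlb f -> tcoef f i = 0.
Proof. by rewrite /tlb; case: constructive_indefinite_description => N HN /=; exact: HN. Qed.

Lemma tcoef_tmk (c : int -> R) N i : tcoef (tmk c N) i = if i < N then 0 else c i.
Proof. by []. Qed.

Lemma tcoef_add f g i : tcoef (tadd f g) i = tcoef f i + tcoef g i.
Proof.
rewrite tcoef_tmk; case: ifP => // H.
by move: H; rewrite lt_min => /andP[/tlbP -> /tlbP ->]; rewrite addr0.
Qed.

Lemma tcoef_opp f i : tcoef (topp f) i = - tcoef f i.
Proof. by rewrite tcoef_tmk; case: ifP => // /tlbP ->; rewrite oppr0. Qed.

Lemma tcoef0 i : tcoef (@tzero R) i = 0.
Proof. by rewrite tcoef_tmk; case: ifP. Qed.

Lemma tcoef1 i : tcoef (@tone R) i = if i == 0 then 1 else 0.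
Proof. by rewrite tcoef_tmk; case: ifP => // /lt_eqF ->. Qed.

Lemma tcoefX i : tcoef (@tvar R) i = if i == 1 then 1 else 0.
Proof. by rewrite tcoef_tmk; case: ifP => // H; case: eqP => // E; move: H; rewrite E. Qed.

Lemma tcoefC (a : R) i : tcoef (tconst a) i = if i == 0 then a else 0.
Proof. by rewrite tcoef_tmk; case: ifP => // /lt_eqF ->. Qed.

Lemma sum_cov (F : int -> R) (L L' : int) (N N' : nat) : L' <= L ->
  L + N%:Z <= L' + N'%:Z -> (forall i, i < L \/ L + N%:Z <= i -> F i = 0) ->
  \sum_(k < N') F (L' + k%:Z) = \sum_(k < N) F (L + k%:Z).
Proof.
move=> H1 H2 HF.
pose d := absz (L - L'); pose e := absz (L' + N'%:Z - (L + N%:Z))%R.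
have HN' : N' = (d + (N + e))%N by rewrite /d /e; lia.
rewrite HN' big_split_ord /= big1 ?add0r; last first.
  by move=> k _; apply: HF; left; have := ltn_ord k; rewrite /d; lia.
rewrite big_split_ord /= [X in _ + X]big1 ?addr0; last first.
  by move=> k _; apply: HF; right; rewrite /d; lia.
by apply: eq_bigr => k _; congr F; rewrite /d; lia.
Qed.

Lemma sum_cov2 (F : int -> R) (L1 L2 : int) (N1 N2 : nat) :
  (forall i, i < L1 \/ L1 + N1%:Z <= i -> F i = 0) ->
  (forall i, i < L2 \/ L2 + N2%:Z <= i -> F i = 0) ->
  \sum_(k < N1) F (L1 + k%:Z) = \sum_(k < N2) F (L2 + k%:Z).
Proof.
move=> C1 C2.
pose L := Num.min L1 L2; pose M := Num.max (L1 + N1%:Z) (L2 + N2%:Z).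
pose N := absz (M - L)%R.
rewrite -(@sum_cov F L1 L N1 N) //; last by rewrite /N /M /L; lia.
  rewrite -(@sum_cov F L2 L N2 N) //; first by rewrite /L; lia.
  by rewrite /N /M /L; lia.
by rewrite /L; lia.
Qed.

Variables sigma sigmai : R -> R.
Hypothesis Hs0 : sigma 0 = 0.
Hypothesis Hsi0 : sigmai 0 = 0.

Lemma spow0 i : spow sigma sigmai i 0 = 0.
Proof.
case: i => m /=.
  by elim: m => //= m ->.
by elim: m => /= [|m ->].
Qed.

Definition tmterm f g (n i : int) := tcoef f i * spow sigma sigmai i (tcoef g (n - i)).

Lemma tmul_cov f g n L N :
  (forall i, i < L \/ L + N%:Z <= i -> tmterm f g n i = 0) ->
  tcoef (tmul sigma sigmai f g) n = \sum_(k < N) tmterm f g n (L + k%:Z).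
Proof.
move=> C; rewrite tcoef_tmk.
set A := tlb f; set B := tlb g.
have z1 : forall i, i < A -> tmterm f g n i = 0.
  by move=> i /tlbP; rewrite /tmterm => ->; rewrite mul0r.
have z2 : forall i, n - i < B -> tmterm f g n i = 0.
  by move=> i /tlbP; rewrite /tmterm => ->; rewrite spow0 mulr0.
have C0 : forall i, i < A \/ A + (absz (n - A - B)%R).+1%:Z <= i -> tmterm f g n i = 0.
  move=> i [/z1 //|H]; apply: z2; lia.
case: ifP => nAB.
  rewrite big1 // => k _; case: (ltP (L + k%:Z) A) => [/z1 //|H]; apply: z2; lia.
rewrite (@sum_cov2 _ L A N (absz (n - A - B)%R).+1) //.
by apply: eq_bigr => k _; rewrite /tmterm; congr (_ * spow _ _ _ (tcoef g _)); lia.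
Qed.

Lemma tmul_def_cov f g n : forall i, i < tlb f \/ tlb f + (absz (n - tlb f - tlb g)%R).+1%:Z <= i ->
  tmterm f g n i = 0.
Proof.
move=> i [/tlbP H|H]; first by rewrite /tmterm H mul0r.
have /tlbP H2 : n - i < tlb g by lia.
by rewrite /tmterm H2 spow0 mulr0.
Qed.

End TLSTheory.

Local Open Scope ring_scope.

Section PhiTheory.
Variables (K : fieldType) (p n : nat) (F : finFieldType) (iota : {rmorphism F -> K}).
Hypothesis pr_p : prime p.
Hypothesis chK : p \in [pchar K].
Hypothesis n_gt0 : (0 < n)%N.
Hypothesis cardF : #|F| = (p ^ n)%N.
Hypothesis surj : forall x : K, exists y : K, y ^+ (p ^ n) = x.
Local Notation q := (p ^ n)%N.

Lemma q_gt1 : (1 < q)%N.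
Proof. by rewrite -(expn0 p) ltn_exp2l ?prime_gt1. Qed.

Lemma frobB (x y : K) m : (x - y) ^+ (p ^ m) = x ^+ (p ^ m) - y ^+ (p ^ m).
Proof.
elim: m => [|m IH]; first by rewrite !expn0 !expr1.
rewrite expnSr !exprM IH.
by rewrite -!(pFrobenius_autE chK) pFrobenius_autB_comm //; exact: mulrC.
Qed.

Lemma frob_inj (x y : K) : x ^+ q = y ^+ q -> x = y.
Proof.
move=> E; apply/eqP; rewrite -subr_eq0; apply/eqP.
have : (x - y) ^+ q == 0 by rewrite frobB E subrr.
by rewrite expf_eq0 => /andP[_ /eqP].
Qed.

Lemma qrootE (y : K) : qroot q y ^+ q = y.
Proof.
rewrite /qroot; case: (surj y) => z Hz.
exact: (epsilon_spec (inhabits y) (fun w => w ^+ q = y) (ex_intro _ z Hz)).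
Qed.

Lemma qroot_fix (c : K) : c ^+ q = c -> qroot q c = c.
Proof. by move=> Hc; apply: frob_inj; rewrite qrootE Hc. Qed.

Lemma iota_fix (a : F) : iota a ^+ q = iota a.
Proof. by rewrite -rmorphXn -cardF expf_card. Qed.

Lemma spowK_fix i (c : K) : c ^+ q = c -> spow (frob q) (qroot q) i c = c.
Proof.
move=> Hc; case: i => m /=.
  by elim: m => //= m ->; rewrite /frob Hc.
by elim: m => /= [|m ->]; rewrite qroot_fix.
Qed.

Lemma spowF i (x : F) : spow id id i x = x.
Proof. case: i => m /=; first by elim: m => //= m ->. by elim: m => /= [|m ->]. Qed.

Lemma frob0 : frob q (0 : K) = 0.
Proof. by rewrite /frob expr0n; case: q q_gt1. Qed.
Lemma qroot0 : qroot q (0 : K) = 0.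
Proof. by apply: qroot_fix; rewrite expr0n; case: q q_gt1. Qed.

Local Notation phi := (phi iota).

Lemma tcoef_phi f i : tcoef (phi f) i = iota (tcoef f i).
Proof. by rewrite tcoef_tmk; case: ifP => // /tlbP ->; rewrite rmorph0. Qed.

Lemma phi_inj : injective phi.
Proof.
move=> f g E; apply: tls_ext => i.
by apply: (fmorph_inj iota); rewrite -!tcoef_phi E.
Qed.

Lemma phi_add f g : phi (tadd f g) = tadd (phi f) (phi g).
Proof. by apply: tls_ext => i; rewrite !(tcoef_phi, tcoef_add) rmorphD. Qed.

Lemma phi_opp f : phi (topp f) = topp (phi f).
Proof. by apply: tls_ext => i; rewrite !(tcoef_phi, tcoef_opp) rmorphN. Qed.

Lemma phi0 : phi (@tzero F) = @tzero K.
Proof. by apply: tls_ext => i; rewrite !(tcoef_phi, tcoef0) rmorph0. Qed.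

Lemma phi1 : phi (@tone F) = @tone K.
Proof. by apply: tls_ext => i; rewrite !(tcoef_phi, tcoef1); case: ifP; rewrite ?rmorph0 ?rmorph1. Qed.

Lemma phiX : phi (@tvar F) = @tvar K.
Proof. by apply: tls_ext => i; rewrite !(tcoef_phi, tcoefX); case: ifP; rewrite ?rmorph0 ?rmorph1. Qed.

Lemma tconst0 : tconst (0 : K) = @tzero K.
Proof. by apply: tls_ext => i; rewrite tcoefC tcoef0; case: ifP. Qed.

Lemma phi_mul f g : phi (tmul id id f g) = tmul (frob q) (qroot q) (phi f) (phi g).
Proof.
apply: tls_ext => m; rewrite tcoef_phi.
have Hterm : forall i, tmterm (frob q) (qroot q) (phi f) (phi g) m i = iota (tmterm id id f g m i).
  move=> i; rewrite /tmterm !tcoef_phi spowK_fix ?iota_fix // spowF rmorphM //.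
pose N := (absz (m - tlb f - tlb g)%R).+1.
rewrite (@tmul_cov _ id id erefl erefl f g m (tlb f) N (@tmul_def_cov _ id id erefl erefl f g m)).
rewrite (@tmul_cov _ (frob q) (qroot q) frob0 qroot0 (phi f) (phi g) m (tlb f) N); last first.
  by move=> i /(@tmul_def_cov _ id id erefl erefl f g m) H; rewrite Hterm H rmorph0.
by rewrite rmorph_sum; apply: eq_bigr => k _; rewrite Hterm.
Qed.


Local Notation tmK := (tmul (frob q) (qroot q)).

Lemma spow1 i : spow (frob q) (qroot q) i (1 : K) = 1.
Proof. by apply: spowK_fix; rewrite expr1n. Qed.

Lemma coef_xtau (x : tls K) m : tcoef (tmK x (@tvar K)) m = tcoef x (m - 1).
Proof.
rewrite (@tmul_cov _ _ _ frob0 qroot0 x (@tvar K) m (m - 1) 1); last first.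
  move=> i Hi; rewrite /tmterm tcoefX.
  have -> : (m - i == 1) = false by apply/eqP; lia.
  by rewrite (spow0 frob0 qroot0) mulr0.
rewrite big_ord1 /tmterm /= addr0.
have -> : m - (m - 1) = 1 by lia.
by rewrite /= spow1 mulr1.
Qed.

Lemma coef_taux (x : tls K) m : tcoef (tmK (@tvar K) x) m = tcoef x (m - 1) ^+ q.
Proof.
rewrite (@tmul_cov _ _ _ frob0 qroot0 (@tvar K) x m 1 1); last first.
  move=> i Hi; rewrite /tmterm tcoefX.
  have -> : (i == 1) = false by apply/eqP; lia.
  by rewrite mul0r.
by rewrite big_ord1 /tmterm /= addr0 mul1r.
Qed.

Lemma comm_tau (x : tls K) : tmK x (@tvar K) = tmK (@tvar K) x <-> forall j, tcoef x j ^+ q = tcoef x j.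
Proof.
split=> [E j|H].
  have E2 : tcoef (tmK x (@tvar K)) (j + 1) = tcoef (tmK (@tvar K) x) (j + 1) by rewrite E.
  move: E2; rewrite coef_xtau coef_taux.
  by have -> : j + 1 - 1 = j by lia.
by apply: tls_ext => m; rewrite coef_xtau coef_taux H.
Qed.

Lemma phi_comm f : tmK (phi f) (@tvar K) = tmK (@tvar K) (phi f).
Proof. by apply/comm_tau => j; rewrite tcoef_phi iota_fix. Qed.

Lemma fixed_in_image (c : K) : c ^+ q = c -> exists a, iota a = c.
Proof.
move=> Hc; case: (pickP (fun a => iota a == c)) => [a /eqP Ha|H]; first by exists a.
pose P : {poly K} := 'X^q - 'X.
have sP : size P = q.+1.
  rewrite /P size_polyDl ?size_polyXn // size_polyN size_polyX ltnS; exact: q_gt1.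
have P0 : P != 0 by rewrite -size_poly_eq0 sP.
have rts : all (root P) (c :: map iota (enum F)).
  apply/allP => y; rewrite inE => /orP[/eqP ->|/mapP[a _ ->]];
  by rewrite /root /P !hornerE ?Hc ?iota_fix subrr.
have U : uniq (c :: map iota (enum F)).
  rewrite /= (map_inj_uniq (fmorph_inj iota)) ?enum_uniq andbT.
  by apply/mapP => -[a _ E]; move: (H a); rewrite E eqxx.
by have := max_poly_roots P0 rts U; rewrite sP /= size_map -cardE cardF ltnn.
Qed.

Definition pre (c : K) : F := odflt 0 [pick a | iota a == c].

Lemma preK c : c ^+ q = c -> iota (pre c) = c.
Proof.
move=> Hc; rewrite /pre; case: pickP => [a /eqP //|H] /=.
have [a Ha] := fixed_in_image Hc; by move: (H a); rewrite Ha eqxx.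
Qed.

Lemma in_image (x : tls K) : (forall j, tcoef x j ^+ q = tcoef x j) -> exists f, x = phi f.
Proof.
move=> Hx.
have Hb : exists N, forall i, i < N -> pre (tcoef x i) = 0.
  exists (tlb x) => i /tlbP Hi; apply: (fmorph_inj iota).
  by rewrite rmorph0 preK Hi // expr0n; case: q q_gt1.
exists (TLS Hb); apply: tls_ext => i; rewrite tcoef_phi /=.
by rewrite preK.
Qed.

End PhiTheory.

Section Syn.
Local Open Scope nat_scope.
Local Notation code := CodeSeq.code.

Fixpoint tvars (t : term) : seq nat :=
  match t with
  | Var n => [:: n]
  | Add a b | Mul a b => tvars a ++ tvars b
  | _ => [::]
  end.

Lemma ccons_gtl a b : a < ccons a b.
Proof. rewrite /ccons (leq_trans (ltn_expl a (ltnSn 1))) // leq_pmulr //. Qed.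
Lemma ccons_gtr a b : b < ccons a b.
Proof.
rewrite /ccons (leq_trans _ (leq_pmull _ _)) ?expn_gt0 //.
by rewrite ltnS -addnn leq_addr.
Qed.

Lemma Rc_gt m : m < Rc m.
Proof.
rewrite /Rc (ltn_trans (ccons_gtl m 0)) // (ltn_trans (ccons_gtl _ 0)) //.
exact: ccons_gtr.
Qed.

Lemma mem_code x l : x \in l -> x < code l.
Proof. by move=> xl; have /allP := CodeSeq.ltn_code l; apply. Qed.

Lemma Rc_in t m : m \in tvars t -> Rc m \in encT t.
Proof.
elim: t => [n|n|n|a IHa b IHb|a IHa b IHb] /=.
- by rewrite inE => /eqP ->; rewrite encT_Var !inE eqxx orbT.
- by [].
- by [].
- by rewrite encT_Add mem_cat => /orP[/IHa|/IHb] H; rewrite inE !mem_cat H ?orbT.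
- by rewrite encT_Mul mem_cat => /orP[/IHa|/IHb] H; rewrite inE !mem_cat H ?orbT.
Qed.

Lemma var_lt_t t m : m \in tvars t -> m < pickle t.
Proof.
move=> /Rc_in H; rewrite pickle_term (ltn_trans (Rc_gt m)) //; exact: mem_code.
Qed.

Lemma var_lt (E : system) e m : e \in E -> m \in tvars e.1 ++ tvars e.2 -> m < pickle E.
Proof.
move=> eE; rewrite mem_cat => Hm.
have H1 : pickle e < pickle E.
  have -> : pickle E = code (map pickle E) by [].
  by apply: mem_code; apply: map_f.
apply: ltn_trans H1.
have -> : pickle e = code [:: pickle e.1; pickle e.2] by [].
case/orP: Hm => /var_lt_t H; apply: (ltn_trans H); apply: mem_code; rewrite !inE eqxx ?orbT //.
Qed.

Lemma tpars_tr t : tpars (tr t) = tpars t.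
Proof. by elim: t => //= a -> b ->. Qed.
Lemma tparfree_tr t : tparfree (tr t) = tparfree t.
Proof. by elim: t => //= a -> b ->. Qed.

End Syn.

Section Sem.
Local Open Scope ring_scope.
Variables (K : fieldType) (p n : nat) (F : finFieldType) (iota : {rmorphism F -> K}).
Hypothesis pr_p : prime p.
Hypothesis chK : p \in [pchar K].
Hypothesis n_gt0 : (0 < n)%N.
Hypothesis cardF : #|F| = (p ^ n)%N.
Hypothesis surj : forall x : K, exists y : K, y ^+ (p ^ n) = x.
Local Notation q := (p ^ n)%N.
Local Notation LF := (LT F).
Local Notation LK := (Ltau K q).
Local Notation phi := (phi iota).

Lemma teval_tr (par : nat -> tls F) (par' : nat -> tls K) env env' t :
  (forall c, par' c = phi (par c)) ->
  (forall m, m \in tvars t -> env' m = phi (env m)) ->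
  @teval LK par' env' (tr t) = phi (@teval LF par env t).
Proof.
move=> Hp; elim: t => [m|i|c|a IHa b IHb|a IHa b IHb] /= He.
- by apply: He; rewrite inE.
- rewrite /hC; case: i => [|[|[|i]]] /=.
  + by rewrite phi0.
  + by rewrite phi1.
  + by rewrite phiX.
  + by rewrite !nth_nil phi0.
- by rewrite Hp.
- rewrite IHa ?IHb ?phi_add // => m Hm; apply: He; by rewrite mem_cat Hm ?orbT.
- rewrite IHa ?IHb; (try by move=> m Hm; apply: He; rewrite mem_cat Hm ?orbT).
  exact: esym (phi_mul iota pr_p chK n_gt0 cardF surj _ _).
Qed.

Lemma sat_app (M : lstruct) par env (E1 E2 : system) :
  @sat M par env (E1 ++ E2) <-> @sat M par env E1 /\ @sat M par env E2.
Proof. exact: List.Forall_app. Qed.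

Lemma sat_cons (M : lstruct) par env (e : term * term) (E : system) :
  @sat M par env (e :: E) <-> @teval M par env e.1 = @teval M par env e.2 /\ @sat M par env E.
Proof. split; first by move=> H; inversion H. by case=> *; constructor. Qed.

Lemma sat_trE (par : nat -> tls F) (par' : nat -> tls K) env env' (E : system) :
  (forall c, par' c = phi (par c)) ->
  (forall m, (m < pickle E)%N -> env' m = phi (env m)) ->
  @sat LK par' env' (trE E) <-> @sat LF par env E.
Proof.
move=> Hp He.
have : forall e m, e \in E -> m \in tvars e.1 ++ tvars e.2 -> env' m = phi (env m).
  by move=> e m eE Hm; apply: He; exact: var_lt eE Hm.
elim: E {He} => [|e E IH] H; first by split=> _; constructor.
rewrite /trE map_cons !sat_cons -/(trE E) IH; last first.
  by move=> e' m eE; apply: H; rewrite inE eE orbT.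
have H1 : forall m, m \in tvars e.1 -> env' m = phi (env m).
  by move=> m Hm; apply: (H e); rewrite ?mem_head // mem_cat Hm.
have H2 : forall m, m \in tvars e.2 -> env' m = phi (env m).
  by move=> m Hm; apply: (H e); rewrite ?mem_head // mem_cat Hm orbT.
rewrite /= (teval_tr Hp H1) (teval_tr Hp H2).
split=> [[/phi_inj E1 H3]|[E1 H3]]; split=> //; by rewrite E1.
Qed.

Lemma sat_ex (par' : nat -> tls K) env' M :
  @sat LK par' env' (exlist M) <->
  (forall i, (i < M)%N -> tmul (frob q) (qroot q) (env' i) (@tvar K) =
                          tmul (frob q) (qroot q) (@tvar K) (env' i)).
Proof.
elim: M => [|M IH] /=; first by split=> // _; constructor.
rewrite sat_cons IH /=; split.
  by case=> E1 H i; rewrite ltnS leq_eqVlt => /orP[/eqP ->|/H].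
by move=> H; split; [apply: H | move=> i Hi; apply: H; rewrite ltnS ltnW].
Qed.

Definition psi (w : tls K) : tls F := epsilon (inhabits (@tzero F)) (fun f => w = phi f).

Lemma psiK w : tmul (frob q) (qroot q) w (@tvar K) = tmul (frob q) (qroot q) (@tvar K) w ->
  phi (psi w) = w.
Proof.
move/(comm_tau pr_p chK n_gt0 cardF surj) => /(in_image iota pr_p n_gt0 cardF) Hw.
by rewrite /psi; symmetry; exact: (epsilon_spec (inhabits (@tzero F)) (fun f => w = phi f) Hw).
Qed.

End Sem.

Local Open Scope ring_scope.

Section MainSec.
Variables (K : fieldType) (p n : nat) (F : finFieldType) (iota : {rmorphism F -> K}).
Hypothesis pr_p : prime p.
Hypothesis chK : p \in [pchar K].
Hypothesis n_gt0 : (0 < n)%N.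
Hypothesis cardF : #|F| = (p ^ n)%N.
Hypothesis surj : forall x : K, exists y : K, y ^+ (p ^ n) = x.
Local Notation q := (p ^ n)%N.
Local Notation LF := (LT F).
Local Notation LK := (Ltau K q).
Local Notation phi := (phi iota).

Lemma parfree_transl M (E : system) : parfree E -> parfree (transl M E).
Proof.
move=> H; apply/List.Forall_app; split.
  elim: H => [|e E' He _ IH]; first by constructor.
  by constructor => //=; rewrite !tparfree_tr.
by elim: M => [|M IH] /=; constructor.
Qed.

Lemma envk_map k (x : k.-tuple (tls F)) (y : nat -> tls F) m :
  @envk LK k (map_tuple phi x) (fun j => phi (y j)) m = phi (@envk LF k x y m).
Proof.
rewrite /envk; case: ifP => // mk.
by rewrite /= (nth_map (@tzero F)) ?size_tuple // phi0.
Qed.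

Lemma comm_sat M (env : nat -> tls F) par' :
  @sat LK par' (fun j => phi (env j)) (exlist M).
Proof. by apply/sat_ex => i _; exact: (phi_comm iota pr_p chK n_gt0 cardF surj). Qed.

Lemma core k (E : system) (S : k.-tuple (tls F) -> Prop) :
  @defines LF k E S -> @defines LK k (transl (k + pickle E) E) (@timage LF LK phi k S).
Proof.
case=> pf HS; split; first exact: parfree_transl.
move=> z; split.
  case=> x [Sx ->]; have [y Hy] := (HS x).1 Sx.
  exists (fun m => phi (y m)); apply/sat_app; split.
    apply/(@sat_trE K p n F iota pr_p chK n_gt0 cardF surj (fun _ => @tzero F) _ (@envk LF k x y)).
    - by move=> c; rewrite phi0.
    - by move=> m _; rewrite envk_map.
    exact: Hy.
  apply/sat_ex => i _; rewrite envk_map.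
  exact: (phi_comm iota pr_p chK n_gt0 cardF surj).
case=> y' /sat_app [H1 /sat_ex Hc].
set env' := @envk LK k z y'.
have Himg : forall m, (m < k + pickle E)%N -> phi (psi iota (env' m)) = env' m.
  by move=> m Hm; apply: (psiK iota pr_p chK n_gt0 cardF surj); apply: Hc.
pose x := map_tuple (psi iota) z; pose y := fun m => psi iota (y' m).
have Henv : forall m, @envk LF k x y m = psi iota (env' m).
  move=> m; rewrite /env' /envk; case: ifP => // mk.
  by rewrite /= (nth_map (@tzero K)) ?size_tuple.
exists x; split.
  apply/(HS x).2; exists y.
  apply/(@sat_trE K p n F iota pr_p chK n_gt0 cardF surj (fun _ => @tzero F) (fun _ => @tzero K) _ env').
  - by move=> c; rewrite phi0.
  - by move=> m Hm; rewrite Henv Himg // (leq_trans Hm) // leq_addl.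
  exact: H1.
apply: eq_from_tnth => i; rewrite tnth_map tnth_map.
have := Himg i (leq_trans (ltn_ord i) (leq_addr _ _)).
by rewrite /env' /envk ltn_ord (tnth_nth (@tzero K)) => ->.
Qed.


Definition Rp (R : recpres LF) : recpres LK :=
  @RecPres LK (rdom R) (fun c => phi (rval R c)) (rzero R) (rone R)
    (radd R) (rmul R) (ropp R) (req R).

Lemma Rp_rec R : recursive_subring R -> recursive_subring (Rp R).
Proof.
case=> Hc [[z0 z1] [[o0 o1] [Ha [Hm [Ho He]]]]]; split=> //=.
split; first by split=> //; rewrite z1; exact: phi0.
split; first by split=> //; rewrite o1; exact: phi1.
split.
  move=> a b da db; have [d e] := Ha a b da db; split=> //; rewrite e; exact: phi_add.
split.
  move=> a b da db; have [d e] := Hm a b da db; split=> //; rewrite e.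
  exact: (phi_mul iota pr_p chK n_gt0 cardF surj).
split.
  move=> a da; have [d e] := Ho a da; split=> //; rewrite e; exact: phi_opp.
move=> a b da db; rewrite He //; split=> [->//|]; exact: phi_inj.
Qed.

Lemma solv_equiv R (E : system) :
  solvable R E <-> solvable (Rp R) (transl (pickle E) E).
Proof.
split.
  case=> env H; exists (fun j => phi (env j)); apply/sat_app; split.
    by apply/(@sat_trE K p n F iota pr_p chK n_gt0 cardF surj (rval R) _ env).
  apply/sat_ex => i _; exact: (phi_comm iota pr_p chK n_gt0 cardF surj).
case=> env' /sat_app [H1 /sat_ex Hc].
exists (fun j => psi iota (env' j)).
apply/(@sat_trE K p n F iota pr_p chK n_gt0 cardF surj (rval R) (rval (Rp R)) _ env') => //.
by move=> m Hm; rewrite (psiK iota pr_p chK n_gt0 cardF surj) //; apply: Hc.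
Qed.

Lemma params_transl R (E : system) M : params_in R E -> params_in (Rp R) (transl M E).
Proof.
move=> H; apply/List.Forall_app; split.
  elim: H => [|e E' He _ IH]; first by constructor.
  by constructor => //=; rewrite !tpars_tr.
by elim: M => [|M IH] /=; constructor.
Qed.

Lemma timage_single (x : tls F) (z : 1.-tuple (tls K)) :
  @timage LF LK phi 1 (fun t => t = [tuple x]) z <-> z = [tuple phi x].
Proof.
split; first by case=> x' [-> ->]; apply: val_inj.
by move=> ->; exists [tuple x]; split=> //; apply: val_inj.
Qed.

Lemma defines_iff (M : lstruct) k (E0 : system) (S S' : k.-tuple (car M) -> Prop) :
  defines E0 S -> (forall z, S z <-> S' z) -> defines E0 S'.
Proof. by case=> H1 H2 H3; split=> // z; rewrite -H3. Qed.

Lemma main_sec :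
  @effective_dioph_map LF LK phi /\ (HTP_negative LF -> HTP_negative LK).
Proof.
split.
  split.
    move=> k S [E0 HE]; exists (transl (k + pickle E0) E0); exact: core.
  exists Gk; split.
    by have [P HP] := cf_Gk; exists P => m; exact: HP [:: m].
  move=> k E0 S HE; exists (transl (k + pickle E0) E0); split; last exact: core.
  by rewrite Gk_pickle pickleK.
case=> R [[Rrec Rconst Rsing] Rneg].
exists (Rp R); split.
  split; first exact: Rp_rec.
    move=> i; case: i => [|[|[|[|i]]]] // _.
    - by exists (rzero R); have [_ [[z0 z1] _]] := Rrec; rewrite /= z1; split=> //; exact: phi0.
    - by exists (rone R); have [_ [_ [[o0 o1] _]]] := Rrec; rewrite /= o1; split=> //; exact: phi1.
    - exists (rzero R); have [_ [[z0 z1] _]] := Rrec; rewrite /= z1; split=> //.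
      by rewrite phi0 tconst0.
    - have [a [da Ha]] := Rconst 2 isT; exists a; split=> //=.
      by move: Ha => /= ->; exact: phiX.
  move=> a da; have [E0 HE] := Rsing a da.
  exists (transl (1 + pickle E0) E0).
  apply: defines_iff (core HE) _ => z; exact: timage_single.
move=> F' [P HP].
have cG : computable1 (fun c => F' (G2 c)).
  have [Q HQ] := cf_G2; exists (PComp P [:: Q]) => m.
  econstructor; last exact: HP.
  by constructor; [exact: HQ [:: m] | constructor].
have [E0 [Epar Enot]] := Rneg _ cG.
exists (transl (pickle E0) E0); split; first exact: params_transl.
move=> Hiff; apply: Enot.
rewrite solv_equiv Hiff.
by rewrite /G2 OUT_pickle.
Qed.

End MainSec.

Theorem mainTheorem7 (K : fieldType) (p n : nat) (F : finFieldType)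
    (iota : {rmorphism F -> K}) :
  prime p -> p \in [pchar K] -> (0 < n)%N -> #|F| = (p ^ n)%N ->
  (forall x : K, exists y : K, y ^+ (p ^ n) = x) ->
  @effective_dioph_map (LT F) (Ltau K (p ^ n)) (phi iota) /\
  (HTP_negative (LT F) -> HTP_negative (Ltau K (p ^ n))).
Proof. move=> *; exact: main_sec. Qed.
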